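(* Let $R$ be a finite commutative local Frobenius ring with residue field $\mathbb{F}_q$, and let $\ell$ be a nonnegative integer. Let $C$ be a linear code over $R$ of length $n$ with generator matrix $\mathrm{G}$ and parity check matrix $\mathrm{H}$. Then $\dim(\texttt{Hull}(C))=\ell$ if and only if $\texttt{Rank}_q(\mathrm{G}\mathrm{G}^\top)=\texttt{Rank}_q(\mathrm{G})-\ell$ or $\texttt{Rank}_q(\mathrm{H}\mathrm{H}^\top)=\texttt{Rank}_q(\mathrm{H})-\ell$.
   Context: A linear code of length $n$ over $R$ is an $R$-submodule of $R^n$; $\dim(C):=\log_q|C|$. $C^\perp$ is the dual with respect to the standard inner product $\sum_j u_jc_j$, and $\texttt{Hull}(C):=C\cap C^\perp$. A generator matrix of $C$ is a matrix whose rows generate $C$; a parity check matrix is a generator matrix of $C^\perp$. For a matrix $\mathrm{A}$ over $R$, $\texttt{Rank}_q(\mathrm{A}):=\log_q|M|$ where $M$ is the $R$-submodule spanned by the rows of $\mathrm{A}$. *)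

(* Defs.v *)
From mathcomp Require Import all_boot all_order all_algebra.
Set Implicit Arguments. Unset Strict Implicit. Unset Printing Implicit Defensive.
Import GRing.Theory.
Local Open Scope ring_scope.

Section RingDefs.
Variable R : finComNzRingType.

Definition is_ideal (I : {set R}) : Prop :=
  [/\ 0 \in I, (forall x y, x \in I -> y \in I -> x + y \in I)
    & (forall r x, x \in I -> r * x \in I)].

Definition is_maximal_ideal (M : {set R}) : Prop :=
  [/\ is_ideal M, (1 \notin M)
    & forall J : {set R}, is_ideal J -> M \subset J -> J = M \/ J = [set: R]].

Definition is_minimal_ideal (I : {set R}) : Prop :=
  [/\ is_ideal I, I != [set 0]
    & forall J : {set R}, is_ideal J -> J \subset I -> J = [set 0] \/ J = I].

Definition is_local_ring : Prop :=
  exists M, is_maximal_ideal M /\ forall M', is_maximal_ideal M' -> M' = M.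

(* For a finite commutative local ring, Frobenius <=> unique minimal ideal
   (the socle is simple). *)
Definition is_frobenius_local : Prop :=
  exists I, is_minimal_ideal I /\ forall I', is_minimal_ideal I' -> I' = I.

(* The residue field R/M has q elements, for the maximal ideal M. *)
Definition residue_field_order (q : nat) : Prop :=
  forall M, is_maximal_ideal M -> #|[set: R]| = (q * #|M|)%N.

Definition is_linear_code (n : nat) (C : {set 'rV[R]_n}) : Prop :=
  [/\ 0 \in C, (forall u v, u \in C -> v \in C -> u + v \in C)
    & (forall (r : R) v, v \in C -> r *: v \in C)].

Definition inner (n : nat) (u v : 'rV[R]_n) : R := \sum_(j < n) u 0 j * v 0 j.

Definition dual_code (n : nat) (C : {set 'rV[R]_n}) : {set 'rV[R]_n} :=
  [set u | [forall c in C, inner u c == 0]].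

Definition hull (n : nat) (C : {set 'rV[R]_n}) : {set 'rV[R]_n} :=
  C :&: dual_code C.

Definition rowspan (k n : nat) (A : 'M[R]_(k, n)) : {set 'rV[R]_n} :=
  [set x *m A | x : 'rV[R]_k].

(* dim(C) = log_q |C| (|C| is a power of q, so the truncated log is exact). *)
Definition dimq (q : nat) (n : nat) (C : {set 'rV[R]_n}) : nat :=
  trunc_log q #|C|.

Definition rankq (q : nat) (k n : nat) (A : 'M[R]_(k, n)) : nat :=
  trunc_log q #|rowspan A|.

End RingDefs.

(* Main.v *)
From HB Require Import structures.
Require Import Defs.
From mathcomp Require Import all_boot all_order all_algebra zify.
Set Implicit Arguments. Unset Strict Implicit. Unset Printing Implicit Defensive.
Import GRing.Theory.
Local Open Scope ring_scope.

Lemma card_fiber (A B : finZmodType) (f : A -> B)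
  (fB : forall x y, f (x - y) = f x - f y) (S : {set A}) :
  (forall x y, x \in S -> y \in S -> x - y \in S) ->
  #|S| = (#|f @: S| * #|[set x in S | f x == (0 : B)%R]|)%N.
Proof.
move=> SB.
rewrite -sum1_card (partition_big f (fun y => y \in f @: S)) /=; last first.
  by move=> x xS; apply: imset_f.
rewrite -sum_nat_const; apply: eq_bigr => y /imsetP [x0 x0S ->].
rewrite sum1dep_card.
have ->: [set x | (x \in S) && (f x == f x0)] = [set x | (x \in S) && (f x == f x0)] by [].
set K := [set x in S | f x == (0:B)%R].
have -> : [set x | (x \in S) && (f x == f x0)] = (fun k => x0 + k) @: K.
  apply/setP => x; rewrite inE; apply/andP/imsetP.
    move=> [xS /eqP fx]; exists (x - x0); last by rewrite addrC subrK.
    by rewrite inE SB // fB fx subrr eqxx.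
  move=> [k]; rewrite inE => /andP [kS /eqP fk] ->.
  have h0 : 0 \in S by rewrite -(subrr x0) SB.
  have -> : x0 + k = x0 - (0 - k) by rewrite sub0r opprK.
  split; first by rewrite SB // SB.
  have f0 : f 0 = 0 by rewrite -(subrr x0) fB subrr.
  by rewrite fB fB fk f0 !subr0.
by rewrite card_imset //; apply: addrI.
Qed.

Definition RV (R : finComNzRingType) n := (R * 'rV[R]_n)%type.
HB.instance Definition _ (R : finComNzRingType) n := GRing.Zmodule.on (RV R n).
HB.instance Definition _ (R : finComNzRingType) n := Finite.on (RV R n).

Section RingPart.
Variable R : finComNzRingType.
Variable q : nat.
Variable M : {set R}.
Hypothesis HM : is_maximal_ideal M.
Hypothesis Muniq : forall M', is_maximal_ideal M' -> M' = M.
Hypothesis Hmin : forall I1 I2 : {set R}, is_minimal_ideal I1 -> is_minimal_ideal I2 -> I1 = I2.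
Hypothesis Hq : #|[set: R]| = (q * #|M|)%N.

Definition annM : {set R} := [set x | [forall m in M, m * x == 0]].

Lemma M0 : (0 : R) \in M.
Proof. by case: HM => [[]]. Qed.

Lemma Mpos : (0 < #|M|)%N.
Proof. by apply/card_gt0P; exists 0; exact: M0. Qed.

Definition Rmul (x : R) : {set R} := [set r * x | r in [set: R]].

Lemma card_Rmul x : x \in annM -> x != 0 -> #|Rmul x| = q.
Proof.
move=> /[!inE] /forall_inP xA xn0.
have := @card_fiber R R (fun r => r * x) (fun a b => mulrBl x a b) [set: R].
move=> /(_ (fun a b _ _ => in_setT _)).
set K := [set r in [set: R] | r * x == 0].
have KM : K = M.
  have idK : is_ideal K.
    rewrite /is_ideal; split; first by rewrite /K !inE mul0r eqxx.
      by move=> a b; rewrite /K !inE /= => /eqP ha /eqP hb; rewrite mulrDl ha hb addr0.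
    by move=> r a; rewrite /K !inE /= => /eqP ha; rewrite -mulrA ha mulr0.
  have MK : M \subset K by apply/subsetP => m mM; rewrite /K !inE /=; apply: xA.
  case: HM => _ _ /(_ K idK MK) [] // KT.
  have : (1 : R) \in K by rewrite KT inE.
  by rewrite /K !inE mul1r (negbTE xn0).
rewrite KM Hq => /eqP; rewrite eqn_pmul2r ?Mpos // => /eqP <-.
by [].
Qed.

Lemma Rmul_ideal x : is_ideal (Rmul x).
Proof.
rewrite /is_ideal; split; first by apply/imsetP; exists 0; rewrite ?inE ?mul0r.
  move=> a b /imsetP [r1 _ ->] /imsetP [r2 _ ->].
  by apply/imsetP; exists (r1 + r2); rewrite ?inE ?mulrDl.
move=> r a /imsetP [r1 _ ->]; apply/imsetP; exists (r * r1); rewrite ?inE ?mulrA //.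
Qed.

Lemma Rmul_self x : x \in Rmul x.
Proof. by apply/imsetP; exists 1; rewrite ?inE ?mul1r. Qed.

Lemma ideal_Rmul (I : {set R}) x : is_ideal I -> x \in I -> Rmul x \subset I.
Proof. by case=> _ _ hI xI; apply/subsetP => y /imsetP [r _ ->]; apply: hI. Qed.

Lemma annM_mul r x : x \in annM -> r * x \in annM.
Proof.
rewrite !inE => /forall_inP h; apply/forall_inP => m mM.
by rewrite mulrA (mulrC m) -mulrA (eqP (h m mM)) mulr0.
Qed.

Lemma Rmul_minimal x : x \in annM -> x != 0 -> is_minimal_ideal (Rmul x).
Proof.
move=> xA xn0; rewrite /is_minimal_ideal; split; first exact: Rmul_ideal.
  apply/eqP => h; have := Rmul_self x; rewrite h inE; exact/negP.
move=> J idJ JS.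
have [J0|] := boolP (J \subset [set 0]).
  left; apply/eqP; rewrite eqEsubset J0 sub1set; by case: idJ.
move=> /subsetPn [y yJ]; rewrite inE => yn0.
right; apply/eqP; rewrite eqEcard JS /=.
have yA : y \in annM.
  by move/subsetP: JS => /(_ y yJ) /imsetP [r _ ->]; apply: annM_mul.
rewrite card_Rmul // -(card_Rmul yA yn0).
by apply: subset_leq_card; apply: ideal_Rmul.
Qed.

Lemma q_pos : (0 < q)%N.
Proof.
case: q Hq => // /=; rewrite mul0n => /eqP; rewrite cards_eq0 => /eqP h.
by have := in_setT (0 : R); rewrite h inE.
Qed.

Lemma card_annM : (#|annM| <= q)%N.
Proof.
have [A0|] := boolP (annM \subset [set 0]).
  by apply: leq_trans (subset_leq_card A0) _; rewrite cards1 q_pos.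
move=> /subsetPn [x xA]; rewrite inE => xn0.
rewrite -(card_Rmul xA xn0); apply: subset_leq_card; apply/subsetP => y yA.
have [->|yn0] := eqVneq y 0.
  by case: (Rmul_ideal x).
rewrite (Hmin (Rmul_minimal xA xn0) (Rmul_minimal yA yn0)); exact: Rmul_self.
Qed.

Lemma q_gt1 : (1 < q)%N.
Proof.
case: HM => _ one_notin _.
have : (#|M| < #|[set: R]|)%N.
  apply: proper_card; rewrite properE subsetT /=; apply/subsetP => /(_ 1 (in_setT _)).
  by apply/negP.
rewrite Hq; case: q => [|[|//]]; by rewrite ?mul0n ?mul1n ?ltnn.
Qed.


Variable n : nat.
Local Notation V := 'rV[R]_n.

Definition subm (C : {set V}) : bool :=
  [&& (0 : V) \in C, [forall u in C, [forall v in C, u + v \in C]]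
    & [forall r : R, [forall v in C, r *: v \in C]]].

Lemma submP C : reflect (is_linear_code C) (subm C).
Proof.
apply: (iffP and3P).
  move=> [h0 /forall_inP hD /forallP hZ]; split => //.
    by move=> u v uC vC; have /forall_inP := hD u uC; apply.
  by move=> r v vC; have /forall_inP := hZ r; apply.
move=> [h0 hD hZ]; split => //.
  by apply/forall_inP => u uC; apply/forall_inP => v vC; apply: hD.
by apply/forallP => r; apply/forall_inP => v vC; apply: hZ.
Qed.

Lemma subm0 C : subm C -> 0 \in C. Proof. by case/submP. Qed.
Lemma submD C u v : subm C -> u \in C -> v \in C -> u + v \in C.
Proof. by case/submP=> _ h _; apply: h. Qed.
Lemma submZ C r v : subm C -> v \in C -> r *: v \in C.
Proof. by case/submP=> _ _ h; apply: h. Qed.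
Lemma submB C u v : subm C -> u \in C -> v \in C -> u - v \in C.
Proof.
move=> sC uC vC; apply: submD => //; rewrite -scaleN1r; exact: submZ.
Qed.

Lemma innerC (u v : V) : inner u v = inner v u.
Proof. by apply: eq_bigr => j _; rewrite mulrC. Qed.
Lemma innerBl (u v w : V) : inner (u - v) w = inner u w - inner v w.
Proof.
rewrite /inner -sumrB; apply: eq_bigr => j _; by rewrite !mxE mulrBl.
Qed.
Lemma innerDr (u v w : V) : inner u (v + w) = inner u v + inner u w.
Proof.
rewrite /inner -big_split; apply: eq_bigr => j _; by rewrite !mxE mulrDr.
Qed.
Lemma innerZr (u v : V) r : inner u (r *: v) = r * inner u v.
Proof.
rewrite /inner mulr_sumr; apply: eq_bigr => j _; rewrite !mxE.
by rewrite mulrA (mulrC _ r) mulrA.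
Qed.
Lemma inner0r (u : V) : inner u 0 = 0.
Proof. by rewrite /inner big1 // => j _; rewrite mxE mulr0. Qed.
Lemma inner0l (u : V) : inner 0 u = 0.
Proof. by rewrite innerC inner0r. Qed.

Lemma dual_subm C : subm (dual_code C).
Proof.
apply/submP; split.
- by rewrite inE; apply/forall_inP => c _; rewrite inner0l.
- move=> u v; rewrite !inE => /forall_inP hu /forall_inP hv.
  apply/forall_inP => c cC; rewrite innerC innerDr !(innerC c).
  by rewrite (eqP (hu c cC)) (eqP (hv c cC)) addr0.
- move=> r v; rewrite !inE => /forall_inP hv; apply/forall_inP => c cC.
  by rewrite innerC innerZr innerC (eqP (hv c cC)) mulr0.
Qed.

Lemma dual_sub (C D : {set V}) : C \subset D -> dual_code D \subset dual_code C.
Proof.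
move=> /subsetP CD; apply/subsetP => u; rewrite !inE => /forall_inP h.
by apply/forall_inP => c cC; apply: h; apply: CD.
Qed.

Lemma step (T D : {set V}) : subm T -> subm D -> T \proper D ->
  (forall E, subm E -> T \subset E -> E \subset D -> (E == T) || (E == D)) ->
  #|D| = (q * #|T|)%N /\ (#|dual_code T| <= q * #|dual_code D|)%N.
Proof.
move=> sT sD /properP [TD [s sD' sT']] hE.
pose f := fun p : RV R n => p.1 *: s + p.2.
pose E (J' : {set R}) := f @: setX J' T.
have E_subm J' : is_ideal J' -> subm (E J').
  case=> J0 JD JZ; apply/submP; split.
  - apply/imsetP; exists (0, 0); first by rewrite inE /= J0 subm0.
    by rewrite /f /= scale0r addr0.
  - move=> u v /imsetP [[a t] /setXP [/= aJ tT] ->] /imsetP [[b t'] /setXP [/= bJ t'T] ->].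
    apply/imsetP; exists (a + b, t + t'); first by rewrite inE /= JD // submD.
    by rewrite /f /= scalerDl addrACA.
  - move=> r v /imsetP [[a t] /setXP [/= aJ tT] ->].
    apply/imsetP; exists (r * a, r *: t); first by rewrite inE /= JZ // submZ.
    by rewrite /f /= scalerDr scalerA.
have EsubD J' : E J' \subset D.
  apply/subsetP => v /imsetP [[a t] /setXP [/= aJ tT] ->].
  apply: submD => //; first exact: submZ.
  exact: (subsetP TD).
have TsubE J' : is_ideal J' -> T \subset E J'.
  case=> J0 _ _; apply/subsetP => t tT; apply/imsetP; exists (0, t).
    by rewrite inE /= J0.
  by rewrite /f /= scale0r add0r.
pose J := [set r : R | r *: s \in T].
have idJ : is_ideal J.
  rewrite /is_ideal; split.
  - by rewrite inE scale0r subm0.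
  - by move=> a b; rewrite !inE => ha hb; rewrite scalerDl submD.
  - by move=> r a; rewrite !inE => ha; rewrite -scalerA submZ.
have JM : J = M.
  apply: Muniq; split => //.
    by rewrite inE scale1r.
  move=> J' idJ' JJ'.
  case/orP: (hE _ (E_subm _ idJ') (TsubE _ idJ') (EsubD J')) => /eqP h.
    left; apply/eqP; rewrite eqEsubset JJ' andbT; apply/subsetP => j jJ'.
    rewrite inE -h; apply/imsetP; exists (j, 0); first by rewrite inE /= jJ' subm0.
    by rewrite /f /= addr0.
  right; move: sD'; rewrite -h => /imsetP [[j t] /setXP [/= jJ tT]] /eqP.
  rewrite /f /= (addrC (j *: s)) -subr_eq -{1}(scale1r s) -scalerBl => /eqP ht.
  have : 1 - j \in J by rewrite inE ht.
  move/(subsetP JJ') => hj.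
  have one : 1 \in J' by rewrite -(subrK j 1); case: idJ' => _ hD _; apply: hD.
  apply/setP => r; rewrite inE -(mulr1 r); case: idJ' => _ _ hZ; exact: hZ.
have idT : is_ideal [set: R].
  by rewrite /is_ideal; split => *; rewrite inE.
have EtD : E [set: R] = D.
  case/orP: (hE _ (E_subm _ idT) (TsubE _ idT) (EsubD _)) => /eqP // h.
  exfalso; move/negP: sT'; apply; rewrite -h; apply/imsetP; exists (1, 0).
    by rewrite inE /= in_setT subm0.
  by rewrite /f /= scale1r addr0.
split.
  have := @card_fiber _ _ f _ (setX [set: R] T).
  have fB : forall x y, f (x - y) = f x - f y.
    by move=> [a t] [b u]; rewrite /f /= scalerBl opprD addrACA.
  move=> /(_ fB).
  have SB : forall x y, x \in setX [set: R] T -> y \in setX [set: R] T -> x - y \in setX [set: R] T.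
    by move=> [a t] [b u] /setXP [_ tT] /setXP [_ uT]; rewrite inE /= in_setT submB.
  move=> /(_ SB).
  have -> : [set x in setX [set: R] T | f x == 0] = (fun r => (r, - (r *: s))) @: J.
    apply/setP => [[a t]]; rewrite !inE /=; apply/andP/imsetP.
      move=> [tT /eqP h0]; exists a.
        rewrite inE; have -> : a *: s = - t by apply/eqP; rewrite -addr_eq0 -[_ + _]/(f (a, t)) h0.
        by rewrite -scaleN1r submZ.
      have -> : t = - (a *: s) by apply/eqP; rewrite -addr_eq0 addrC -[_ + _]/(f (a, t)) h0.
      by [].
    move=> [r rJ [-> ->]]; split; first by rewrite -scaleN1r submZ //; move: rJ; rewrite inE.
    by rewrite /f /= subrr.
  rewrite (@card_imset _ _ (fun r : R => (r, - (r *: s)))); last by move=> a b h; exact: (congr1 fst h).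
  rewrite cardsX -/(E [set: R]) EtD JM Hq mulnAC => /eqP.
  by rewrite eqn_pmul2r ?Mpos // => /eqP.
have := @card_fiber _ _ (fun u : V => inner u s) (fun a b => innerBl a b s) (dual_code T).
move=> /(_ (fun a b ha hb => submB (dual_subm T) ha hb)).
have -> : [set u in dual_code T | inner u s == 0] = dual_code D.
  apply/setP => u; rewrite !inE; apply/andP/idP.
    move=> [/forall_inP hT hs]; apply/forall_inP => c.
    rewrite -EtD => /imsetP [[a t] /setXP [/= _ tT] ->].
    by rewrite /f /= innerDr innerZr (eqP hs) mulr0 add0r hT.
  move=> hD; split; last by move/forall_inP: hD; apply.
  by have := subsetP (dual_sub TD) u; rewrite !inE; apply.
move=> ->; rewrite leq_mul2r; apply/orP; right.
apply: leq_trans card_annM; apply: subset_leq_card; apply/subsetP => x.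
move=> /imsetP [u]; rewrite inE => /forall_inP hu ->.
rewrite inE; apply/forall_inP => m mM; rewrite -innerZr hu //.
by move: mM; rewrite -JM inE.
Qed.


Lemma subm_set0 : subm [set 0 : V].
Proof.
apply/submP; split; first by rewrite inE.
  by move=> u v; rewrite !inE => /eqP -> /eqP ->; rewrite addr0.
by move=> r v; rewrite !inE => /eqP ->; rewrite scaler0.
Qed.

Lemma subm_setT : subm [set: V].
Proof. by apply/submP; split => *; rewrite inE. Qed.

Lemma exists_below (D : {set V}) : subm D -> D != [set 0] ->
  exists T, [/\ subm T, T \proper D &
    forall E, subm E -> T \subset E -> E \subset D -> (E == T) || (E == D)].
Proof.
move=> sD D0.
have P0 : subm [set 0] && ([set 0] \proper D).
  rewrite subm_set0 /= properEneq eq_sym D0 /= sub1set; exact: subm0.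
case: (@arg_maxnP _ [set 0 : V] (fun E => subm E && (E \proper D)) (fun E : {set V} => #|E|) P0) => T /andP [sT TD] Tmax.
exists T; split => // E sE TE ED.
have [_|EnD] := eqVneq E D; first by rewrite orbT.
have ED' : E \proper D by rewrite properEneq EnD.
have := Tmax E; rewrite sE ED' => /(_ isT) le.
by rewrite orbF eq_sym eqEcard TE; exact: le.
Qed.

Lemma exists_above (D : {set V}) : subm D -> D != [set: V] ->
  exists D', [/\ subm D', D \proper D' &
    forall E, subm E -> D \subset E -> E \subset D' -> (E == D) || (E == D')].
Proof.
move=> sD DT.
have P0 : subm [set: V] && (D \proper [set: V]).
  by rewrite subm_setT /= properEneq DT subsetT.
case: (@arg_minnP _ [set: V] (fun E => subm E && (D \proper E)) (fun E : {set V} => #|E|) P0) => D' /andP [sD' DD'] Dmin.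
exists D'; split => // E sE DE ED'.
have [_|EnD] := eqVneq E D; first by [].
have DE' : D \proper E by rewrite properEneq eq_sym EnD.
have := Dmin E; rewrite sE DE' => /(_ isT) le.
by rewrite eqEcard ED' le orbT.
Qed.

Lemma subm_pow (D : {set V}) : subm D -> exists e, #|D| = (q ^ e)%N.
Proof.
move: {2}#|D| (leqnn #|D|) => k; elim: k D => [|k IH] D le sD.
  by move: le; rewrite leqn0 cards_eq0 => /eqP D0; move: (subm0 sD); rewrite D0 inE.
have [->|D0] := eqVneq D [set 0]; first by exists 0%N; rewrite cards1.
have [T [sT TD hT]] := exists_below sD D0.
have [e he] := IH T (leq_trans (proper_card TD) le) sT.
exists e.+1; rewrite expnS -he; exact: (step sT sD TD hT).1.
Qed.

Definition gg (D : {set V}) := (#|D| * #|dual_code D|)%N.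

Lemma gg_mono (T D : {set V}) : subm T -> subm D -> T \proper D ->
  (forall E, subm E -> T \subset E -> E \subset D -> (E == T) || (E == D)) ->
  (gg T <= gg D)%N.
Proof.
move=> sT sD TD hT; have [h1 h2] := step sT sD TD hT.
rewrite /gg h1; apply: leq_trans (leq_mul (leqnn #|T|) h2) _; by rewrite mulnA (mulnC #|T|).
Qed.

Lemma dual_set0 : dual_code [set 0 : V] = [set: V].
Proof.
apply/setP => u; rewrite !inE; apply/forall_inP => c; rewrite inE => /eqP ->.
by rewrite inner0r.
Qed.

Lemma dual_setT : dual_code [set: V] \subset [set 0].
Proof.
apply/subsetP => u; rewrite !inE => /forall_inP h.
apply/eqP/rowP => i; rewrite mxE.
have := h (delta_mx 0 i) (in_setT _); rewrite /inner (bigD1 i) //= big1.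
  by rewrite mxE !eqxx mulr1 addr0 => /eqP.
by move=> j ji; rewrite mxE (negbTE ji) andbF mulr0.
Qed.

Lemma gg_ge (D : {set V}) : subm D -> (#|[set: V]| <= gg D)%N.
Proof.
move: {2}#|D| (leqnn #|D|) => k; elim: k D => [|k IH] D le sD.
  by move: le; rewrite leqn0 cards_eq0 => /eqP D0; move: (subm0 sD); rewrite D0 inE.
have [->|D0] := eqVneq D [set 0]; first by rewrite /gg dual_set0 cards1 mul1n.
have [T [sT TD hT]] := exists_below sD D0.
apply: leq_trans (gg_mono sT sD TD hT).
exact: IH T (leq_trans (proper_card TD) le) sT.
Qed.

Lemma gg_le (D : {set V}) : subm D -> (gg D <= #|[set: V]|)%N.
Proof.
move: {2}(#|[set: V]| - #|D|)%N (leqnn (#|[set: V]| - #|D|)) => k.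
elim: k D => [|k IH] D le sD.
  have DT : D = [set: V].
    apply/eqP; rewrite eqEcard subsetT /=; by move: le; rewrite leqn0 subn_eq0.
  rewrite DT /gg; apply: leq_trans (leq_mul (leqnn _) (subset_leq_card dual_setT)) _.
  by rewrite cards1 muln1.
have [->|DT] := eqVneq D [set: V].
  rewrite /gg; apply: leq_trans (leq_mul (leqnn _) (subset_leq_card dual_setT)) _.
  by rewrite cards1 muln1.
have [D' [sD' DD' hD]] := exists_above sD DT.
apply: leq_trans (gg_mono sD sD' DD' hD) _.
apply: IH sD'.
have := proper_card DD'; have := subset_leq_card (subsetT D').
move: le; lia.
Qed.

Lemma gg_eq (D : {set V}) : subm D -> gg D = #|[set: V]|.
Proof. by move=> sD; apply/eqP; rewrite eqn_leq gg_le // gg_ge. Qed.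

Lemma dual_dual (C : {set V}) : subm C -> dual_code (dual_code C) = C.
Proof.
move=> sC; apply/esym/eqP; rewrite eqEcard; apply/andP; split.
  apply/subsetP => c cC; rewrite inE; apply/forall_inP => u; rewrite inE.
  by move/forall_inP => h; rewrite innerC h.
have h1 := gg_eq sC; have h2 := gg_eq (dual_subm C).
have pos : (0 < #|dual_code C|)%N by apply/card_gt0P; exists 0; apply: subm0; apply: dual_subm.
rewrite /gg in h1 h2; rewrite -(leq_pmul2l pos) h2 mulnC h1 //.
Qed.


Lemma inner_mx (u v : V) : inner u v = (u *m v^T) 0 0.
Proof. by rewrite /inner mxE; apply: eq_bigr => j _; rewrite mxE. Qed.

Lemma rowspan_subm k (A : 'M[R]_(k, n)) : subm (rowspan A).
Proof.
apply/submP; split.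
- by apply/imsetP; exists 0; rewrite ?mul0mx.
- move=> u v /imsetP [x _ ->] /imsetP [y _ ->]; apply/imsetP; exists (x + y) => //.
  by rewrite mulmxDl.
- move=> r v /imsetP [x _ ->]; apply/imsetP; exists (r *: x) => //.
  by rewrite scalemxAl.
Qed.

Lemma ker_hull k (A : 'M[R]_(k, n)) (c : V) :
  (c *m A^T == 0) = (c \in dual_code (rowspan A)).
Proof.
rewrite inE; apply/eqP/forall_inP.
  move=> h d /imsetP [x _ ->].
  by rewrite inner_mx trmx_mul mulmxA h mul0mx mxE.
move=> h; apply/rowP => i; rewrite !mxE.
have := h (row i A); rewrite rowE.
have -> : delta_mx 0 i *m A \in rowspan A by apply/imsetP; exists (delta_mx 0 i).
move=> /(_ isT) /eqP h0; rewrite -rowE in h0; apply: etrans h0; rewrite /inner.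
by apply: eq_bigr => j _; rewrite !mxE.
Qed.

Lemma main_count k (A : 'M[R]_(k, n)) :
  #|rowspan A| = (#|rowspan (A *m A^T)| * #|hull (rowspan A)|)%N.
Proof.
have := @card_fiber _ _ (fun c : V => c *m A^T) (fun a b => mulmxBl a b A^T) (rowspan A).
move=> /(_ (fun a b ha hb => submB (rowspan_subm A) ha hb)).
have -> : [set x in rowspan A | x *m A^T == 0] = hull (rowspan A).
  by apply/setP => c; rewrite !inE; congr (_ && _); rewrite ker_hull inE.
have -> : [set x *m A^T | x in rowspan A] = rowspan (A *m A^T).
  rewrite /rowspan -imset_comp; apply: eq_imset => x /=; by rewrite mulmxA.
by [].
Qed.


Lemma subm_setI (C D : {set V}) : subm C -> subm D -> subm (C :&: D).
Proof.
move=> sC sD; apply/submP; split.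
- by rewrite inE !subm0.
- by move=> u v; rewrite !inE => /andP [uC uD] /andP [vC vD]; rewrite !submD.
- by move=> r v; rewrite !inE => /andP [vC vD]; rewrite !submZ.
Qed.

End RingPart.


Section Final.
Variable R : finComNzRingType.
Variable q : nat.
Variable M : {set R}.
Hypothesis HM : is_maximal_ideal M.
Hypothesis Muniq : forall M', is_maximal_ideal M' -> M' = M.
Hypothesis Hmin : forall I1 I2 : {set R}, is_minimal_ideal I1 -> is_minimal_ideal I2 -> I1 = I2.
Hypothesis Hq : #|[set: R]| = (q * #|M|)%N.
Variable n : nat.

Lemma final (l k k' : nat) (C : {set 'rV[R]_n}) (G : 'M[R]_(k, n)) (H : 'M[R]_(k', n)) :
  is_linear_code C ->
  rowspan G = C -> rowspan H = dual_code C ->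
  (dimq q (hull C) = l <->
   ((rankq q (G *m G^T))%:Z = (rankq q G)%:Z - l%:Z \/
    (rankq q (H *m H^T))%:Z = (rankq q H)%:Z - l%:Z)).
Proof.
move=> /submP sC hG hH.
have q1 := q_gt1 HM Hq.
have pw := subm_pow HM Muniq Hmin Hq.
have [a ha] := pw _ _ (rowspan_subm G).
have [b hb] := pw _ _ (rowspan_subm (G *m G^T)).
have [h hh] := pw _ _ (subm_setI sC (dual_subm C)).
have [a' ha'] := pw _ _ (rowspan_subm H).
have [b' hb'] := pw _ _ (rowspan_subm (H *m H^T)).
have hullH : hull (rowspan H) = hull C.
  by rewrite /hull hH (dual_dual HM Muniq Hmin Hq sC) setIC.
have E1 : a = (b + h)%N.
  apply/eqP; rewrite -(eqn_exp2l _ _ q1) expnD -ha -hb.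
  have := main_count G; rewrite hG /hull hh => ->; by [].
have E2 : a' = (b' + h)%N.
  apply/eqP; rewrite -(eqn_exp2l _ _ q1) expnD -ha' -hb'.
  have := main_count H; rewrite hullH /hull hh => ->; by [].
rewrite /rankq /dimq /hull ha hb ha' hb' hh !trunc_expnK // E1 E2.
split.
  move=> <-; left; lia.
by case; lia.
Qed.

End Final.
Theorem corollary3p13 (R : finComNzRingType) (q : nat) (l : nat)
    (n k k' : nat) (C : {set 'rV[R]_n})
    (G : 'M[R]_(k, n)) (H : 'M[R]_(k', n)) :
  is_local_ring R -> is_frobenius_local R -> residue_field_order R q ->
  is_linear_code C ->
  rowspan G = C -> rowspan H = dual_code C ->
  (dimq q (hull C) = l <->
   ((rankq q (G *m G^T))%:Z = (rankq q G)%:Z - l%:Z \/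
    (rankq q (H *m H^T))%:Z = (rankq q H)%:Z - l%:Z)).
Proof.
move=> [M [HM Muniq]] [I0 [_ Iuniq]] Hres.
have Hmin : forall I1 I2 : {set R}, is_minimal_ideal I1 -> is_minimal_ideal I2 -> I1 = I2.
  by move=> I1 I2 h1 h2; rewrite (Iuniq _ h1) (Iuniq _ h2).
exact: (final HM Muniq Hmin (Hres M HM)).
Qed.
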